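(* Let $f:\mathbb{N}\to\mathbb{R}$ with $f(1)=1$ be multiplicative (i.e. $f(mn)=f(m)f(n)$ for coprime $m,n$). Assume there exist $A>0$ and $c\in(0,1)$ such that $|f(n)|\leq A c^n$ for all $n\geq2$. Then $$|f^{-1}(n)| \leq \left(\frac{A}{A+1}\right)^{\omega(n)} (A+1)^{\Omega(n)} n^{\frac{3\ln c}{\ln 3}}, \quad n\geq 2.$$
   Context: $f^{-1}$ denotes the Dirichlet inverse of $f$: the arithmetic function with $\sum_{d\mid n} f(n/d) f^{-1}(d)=\varepsilon(n)$ for all $n$, where $\varepsilon(1)=1$ and $\varepsilon(n)=0$ for $n\ge2$. $\omega(n)$ is the number of distinct prime factors of $n$ and $\Omega(n)$ the number of prime factors counted with multiplicity. *)

(* Defs.v *)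
From mathcomp Require Import all_boot all_order all_algebra.
From mathcomp Require Import reals exp.
Set Implicit Arguments. Unset Strict Implicit. Unset Printing Implicit Defensive.
Import Order.TTheory GRing.Theory Num.Theory.
Local Open Scope ring_scope.

(* arithmetic functions are maps nat -> R; the value at 0 is irrelevant *)
Definition mult_arith (R : realType) (f : nat -> R) : Prop :=
  f 1%N = 1 /\ forall m n : nat, (0 < m)%N -> (0 < n)%N -> coprime m n ->
    f (m * n)%N = f m * f n.

Definition eps_fn (R : realType) (n : nat) : R := (n == 1%N)%:R.

Definition is_dirichlet_inverse (R : realType) (f g : nat -> R) : Prop :=
  forall n : nat, (0 < n)%N ->
    \sum_(d <- divisors n) f (n %/ d)%N * g d = eps_fn R n.

Definition omega (n : nat) : nat := size (primes n).
Definition bigOmega (n : nat) : nat := (\sum_(p <- primes n) logn p n)%N.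

(* Main.v *)
Require Import Defs.
From mathcomp Require Import all_boot all_order all_algebra.
From mathcomp Require Import reals exp.
From mathcomp Require Import zify ring lra.
Import Order.TTheory GRing.Theory Num.Theory.
Local Open Scope ring_scope.
Set Implicit Arguments. Unset Strict Implicit. Unset Printing Implicit Defensive.

Lemma dvd_coprime_split d m n : coprime m n -> (d %| m * n)%N ->
  d = (gcdn d m * gcdn d n)%N.
Proof.
move=> cmn dmn; apply/eqP; rewrite eqn_dvd; apply/andP; split.
  rewrite muln_gcdl dvdn_gcd dvdn_mulr //= muln_gcdr dvdn_gcd dvdn_mull //=.
rewrite Gauss_dvd ?dvdn_gcdl //.
exact: coprime_dvdl (dvdn_gcdr _ _) (coprime_dvdr (dvdn_gcdr _ _) cmn).
Qed.

Lemma sum_divisorsM (R : realType) m n (F : nat -> R) :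
  (0 < m)%N -> (0 < n)%N -> coprime m n ->
  \sum_(d <- divisors (m * n)) F d =
  \sum_(d1 <- divisors m) \sum_(d2 <- divisors n) F (d1 * d2)%N.
Proof.
move=> m0 n0 cmn.
rewrite -(big_allpairs_dep (h := fun i1 i2 => (i1 * i2)%N)).
apply: perm_big; apply: uniq_perm.
- exact: divisors_uniq.
- apply: allpairs_uniq; try exact: divisors_uniq.
  move=> [a1 a2] [b1 b2] /allpairsP[[x1 x2] [/= h1 h2 [-> ->]]].
  move=> /allpairsP[[y1 y2] [/= k1 k2 [-> ->]]] /= E.
  rewrite -!dvdn_divisors // in h1 h2 k1 k2.
  have e1 : forall u v, (u %| m)%N -> (v %| n)%N -> gcdn (u * v) m = u.
    move=> u v um vn; rewrite gcdnC Gauss_gcdl; first exact/gcdn_idPr.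
    exact: coprime_dvdr vn cmn.
  have e2 : forall u v, (u %| m)%N -> (v %| n)%N -> gcdn (u * v) n = v.
    move=> u v um vn; rewrite gcdnC Gauss_gcdr; first exact/gcdn_idPr.
    rewrite coprime_sym; exact: coprime_dvdl um cmn.
  have -> : x1 = y1 by rewrite -(e1 x1 x2 h1 h2) E e1.
  by have -> : x2 = y2 by rewrite -(e2 x1 x2 h1 h2) E e2.
- move=> d; rewrite -dvdn_divisors ?muln_gt0 ?m0 //.
  apply/idP/allpairsP => [dmn|[[x1 x2] [/= h1 h2 ->]]].
    exists (gcdn d m, gcdn d n); rewrite /= -!dvdn_divisors // !dvdn_gcdr.
    by split => //; exact: dvd_coprime_split.
  rewrite -!dvdn_divisors // in h1 h2; exact: dvdn_mul.
Qed.


Section Inv.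
Variable R : realType.
Variables f g : nat -> R.
Hypothesis fm : mult_arith f.
Hypothesis gi : is_dirichlet_inverse f g.

Lemma g1 : g 1%N = 1.
Proof.
have := gi (ltn0Sn 0); have -> : divisors 1 = [:: 1%N] by [].
rewrite big_cons big_nil addr0 divn1 /eps_fn eqxx; case: fm => -> _.
by rewrite mul1r.
Qed.

Lemma g_mul m n : (0 < m)%N -> (0 < n)%N -> coprime m n -> g (m * n)%N = g m * g n.
Proof.
move: {2}(m * n)%N (leqnn (m * n)) => N; elim: N m n => [|N IH] m n.
  move=> le m0 n0; have : (0 < m * n)%N by rewrite muln_gt0 m0.
  by rewrite ltnNge le.
move=> le m0 n0 cmn.
have mn0 : (0 < m * n)%N by rewrite muln_gt0 m0.
have key := gi mn0; rewrite sum_divisorsM // in key.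
set X := g (m * n)%N - g m * g n.
have pw : forall d1 d2, d1 \in divisors m -> d2 \in divisors n ->
   f ((m * n) %/ (d1 * d2))%N * g (d1 * d2)%N =
   f (m %/ d1)%N * g d1 * (f (n %/ d2)%N * g d2) + ((d1 == m) && (d2 == n))%:R * X.
  move=> d1 d2; rewrite -!dvdn_divisors // => h1 h2.
  have d10 : (0 < d1)%N by apply: dvdn_gt0 h1.
  have d20 : (0 < d2)%N by apply: dvdn_gt0 h2.
  have hdiv : ((m * n) %/ (d1 * d2) = (m %/ d1) * (n %/ d2))%N.
    by rewrite -{1}(divnK h1) -{1}(divnK h2) mulnACA mulnK // muln_gt0 d10.
  case: fm => f1 fM.
  have [e|ne] := boolP ((d1 == m) && (d2 == n)).
    move/andP: e => [/eqP e1 /eqP e2]; subst d1 d2.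
    by rewrite !divnn m0 n0 mn0 f1 /X /= !mul1r addrC subrK.
  rewrite /= mul0r addr0 hdiv.
  have cd : coprime d1 d2.
    by apply: coprime_dvdl h1 _; apply: coprime_dvdr h2 cmn.
  have l1 := dvdn_leq m0 h1; have l2 := dvdn_leq n0 h2.
  have lt : (d1 * d2 <= N)%N.
    move: ne; rewrite negb_and => /orP[] ne.
      have : (d1 < m)%N by rewrite ltn_neqAle ne l1.
      nia.
    have : (d2 < n)%N by rewrite ltn_neqAle ne l2.
    nia.
  rewrite (IH d1 d2) // fM ?divn_gt0 //.
  - ring.
  - apply: coprime_dvdl (_ : (m %/ d1 %| m)%N) _.
      by rewrite -{2}(divnK h1) dvdn_mulr.
    apply: coprime_dvdr (_ : (n %/ d2 %| n)%N) cmn.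
    by rewrite -{2}(divnK h2) dvdn_mulr.
have : \sum_(d1 <- divisors m) \sum_(d2 <- divisors n)
   f ((m * n) %/ (d1 * d2))%N * g (d1 * d2)%N =
   eps_fn R m * eps_fn R n + X.
  rewrite -(gi m0) -(gi n0) big_distrlr /=.
  have hX : X = \sum_(d1 <- divisors m) \sum_(d2 <- divisors n)
       ((d1 == m) && (d2 == n))%:R * X; last rewrite {1}hX.
    rewrite (bigD1_seq m) ?divisors_id ?divisors_uniq //=.
    rewrite (bigD1_seq n) ?divisors_id ?divisors_uniq //= !eqxx mul1r.
    rewrite big1 ?addr0; last by move=> d2 /negbTE ->; rewrite andbF mul0r.
    rewrite big1 ?addr0 // => d1 /negbTE ne1; rewrite big1 // => d2 _.
    by rewrite ne1 mul0r.
  rewrite -big_split; apply: eq_big_seq => d1 h1 /=.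
  rewrite -big_split; apply: eq_big_seq => d2 h2 /=; exact: pw.
have epsM : eps_fn R (m * n) = eps_fn R m * eps_fn R n.
  by rewrite /eps_fn muln_eq1; case: (m == 1%N); case: (n == 1%N); rewrite /= ?mul1r ?mul0r.
rewrite key epsM => H.
have : X = 0 by lra.
by rewrite /X => /eqP; rewrite subr_eq0 => /eqP.
Qed.
End Inv.


Lemma sum_divisors_pexp (R : realType) p k (F : nat -> R) : prime p ->
  \sum_(d <- divisors (p ^ k)) F d = \sum_(i < k.+1) F (p ^ i)%N.
Proof.
move=> pp; have p1 := prime_gt1 pp.
rewrite -(big_mkord xpredT (fun i => F (p ^ i)%N)) /index_iota subn0.
rewrite -(big_map (expn p) xpredT).
apply: perm_big; apply: uniq_perm.
- exact: divisors_uniq.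
- by rewrite map_inj_uniq ?iota_uniq //; apply: expnI.
move=> d; rewrite -dvdn_divisors ?expn_gt0 ?(ltnW p1) //.
apply/(dvdn_pfactor _ _ pp)/mapP => [[i ik ->]|[i ik ->]].
  by exists i => //; rewrite mem_iota add0n ltnS.
by exists i => //; move: ik; rewrite mem_iota add0n ltnS.
Qed.

Lemma cube_le_pow3 m : (m ^ 3 <= 3 ^ m)%N.
Proof.
elim: m => [|m IH] //.
case: (leqP m 2) => hm.
  by case: m hm IH => [|[|[|]]].
rewrite [(3 ^ m.+1)%N]expnS; apply: leq_trans (leq_mul (leqnn 3) IH).
have -> : (m.+1 ^ 3 = m.+1 * m.+1 * m.+1)%N by rewrite !expnS expn0 muln1 mulnA.
have -> : (m ^ 3 = m * m * m)%N by rewrite !expnS expn0 muln1 mulnA.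
have h1 : (3 * m <= m * m)%N by rewrite leq_mul2r hm orbT.
have h2 : (3 * m * m <= m * m * m)%N by rewrite leq_mul2r h1 orbT.

lia.
Qed.

Section Bound.
Variable R : realType.

Definition ee (c : R) : R := 3 * ln c / ln 3.

Lemma cpow (c : R) m : 0 < c -> c < 1 -> (1 <= m)%N ->
  c ^+ m <= m%:R `^ ee c.
Proof.
move=> c0 c1 m1.
have m0 : (0 : R) < m%:R by rewrite ltr0n.
rewrite -[c in c ^+ _]lnK ?posrE // -expRM_natl /powR gt_eqF // ler_expR.
have l3 : (0 : R) < ln 3 by apply: ln_gt0; rewrite ltr1n.
have lc : ln c < 0 by apply: ln_lt0; rewrite c0 c1.
have p3 : (0:R) < 3 by rewrite ltr0n.
have key : 3 * ln (m%:R : R) <= m%:R * ln 3.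
  have h : ln ((m%:R : R) ^+ 3) <= ln ((3 : R) ^+ m).
    rewrite ler_ln; first last.
    - by rewrite posrE exprn_gt0.
    - by rewrite posrE exprn_gt0.
    rewrite -natrX (_ : (3:R) ^+ m = (3 ^ m)%:R); last by rewrite natrX.
    by rewrite ler_nat cube_le_pow3.
  rewrite lnXn // lnXn // in h.
  by rewrite mulr_natl mulr_natl.
rewrite /ee mulrAC ler_pdivlMr //.
rewrite -subr_ge0.
have -> : 3 * ln c * ln (m%:R : R) - m%:R * ln c * ln 3 =
   (- ln c) * (m%:R * ln 3 - 3 * ln (m%:R : R)) by ring.
by apply: mulr_ge0; [rewrite oppr_ge0 ltW | rewrite subr_ge0].
Qed.
End Bound.


Section PP.
Variable R : realType.
Variables f g : nat -> R.
Hypothesis fm : mult_arith f.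
Hypothesis gi : is_dirichlet_inverse f g.

Lemma g_rec p k : prime p ->
  g (p ^ k.+1)%N = - \sum_(i < k.+1) f (p ^ (k.+1 - i))%N * g (p ^ i)%N.
Proof.
move=> pp; have p1 := prime_gt1 pp; have p0 := ltnW p1.
have pk0 : (0 < p ^ k.+1)%N by rewrite expn_gt0 p0.
have := gi pk0.
rewrite sum_divisors_pexp // big_ord_recr /= divnn expn_gt0 p0 /=.
case: fm => f1 _; rewrite f1 mul1r /eps_fn.
have -> : (p ^ k.+1 == 1)%N = false.
  by apply/negbTE; rewrite -(expn0 p) eqn_exp2l.
move/eqP; rewrite addrC addr_eq0 => /eqP ->.
congr (- _); apply: eq_bigr => i _; congr (f _ * _).
by rewrite expnB // ltnW.
Qed.

Definition bb (A : R) (k : nat) : R := if k is k'.+1 then A * (A + 1) ^+ k' else 1.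

Lemma bsum A k : \sum_(i < k.+1) A * bb A i = bb A k.+1.
Proof.
elim: k => [|k IH]; first by rewrite big_ord1 /= !mulr1.
rewrite big_ord_recr /= IH /= exprS; ring.
Qed.

Variables A c : R.
Hypothesis A0 : 0 < A.
Hypothesis c0 : 0 < c.
Hypothesis c1 : c < 1.
Hypothesis fb : forall n : nat, (2 <= n)%N -> `|f n| <= A * c ^+ n.

Lemma fbound m : (2 <= m)%N -> `|f m| <= A * m%:R `^ ee c.
Proof.
move=> m2; apply: le_trans (fb m2) _; rewrite ler_pM2l //.
by apply: cpow => //; apply: ltnW.
Qed.

Lemma gpp p k : prime p -> `|g (p ^ k)%N| <= bb A k * (p ^ k)%N%:R `^ ee c.
Proof.
move=> pp; have p1 := prime_gt1 pp; have p0 := ltnW p1.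
elim/ltn_ind: k => -[|k] IH.
  by rewrite expn0 (g1 fm gi) /= powR1 normr1 mul1r.
rewrite g_rec // normrN.
apply: le_trans (ler_norm_sum _ _ _) _.
rewrite -bsum mulr_suml; apply: ler_sum => i _.
have ki : (0 < k.+1 - i)%N by rewrite subn_gt0.
rewrite normrM.
have -> : A * bb A i * (p ^ k.+1)%N%:R `^ ee c =
   (A * (p ^ (k.+1 - i))%N%:R `^ ee c) * (bb A i * (p ^ i)%N%:R `^ ee c).
  have e : (p ^ k.+1 = p ^ (k.+1 - i) * p ^ i)%N.
    by rewrite -expnD subnK // ltnW.
  rewrite e natrM powRM //; ring.
apply: ler_pM => //.
- apply: fbound; apply: (leq_trans p1).
  by rewrite -{1}(expn1 p) leq_exp2l.
- exact: IH (ltn_ord i).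
Qed.

End PP.


Lemma primes_disj m n p : coprime m n -> p \in primes m -> p \in primes n -> False.
Proof.
move=> cmn; rewrite !mem_primes => /and3P[pp _ pm] /and3P[_ _ pn].
have : (p %| gcdn m n)%N by rewrite dvdn_gcd pm pn.
by rewrite (eqP cmn) dvdn1 => /eqP p1; move: pp; rewrite p1.
Qed.

Lemma primes_perm m n : (0 < m)%N -> (0 < n)%N -> coprime m n ->
  perm_eq (primes (m * n)) (primes m ++ primes n).
Proof.
move=> m0 n0 cmn; apply: uniq_perm.
- exact: primes_uniq.
- rewrite cat_uniq !primes_uniq andbT /=; apply/hasPn => p pn; apply/negP => pm.
  exact: primes_disj cmn pm pn.
by move=> p; rewrite primesM // mem_cat.
Qed.

Lemma omegaM m n : (0 < m)%N -> (0 < n)%N -> coprime m n ->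
  omega (m * n) = (omega m + omega n)%N.
Proof. by move=> m0 n0 cmn; rewrite /omega (perm_size (primes_perm m0 n0 cmn)) size_cat. Qed.

Lemma bigOmegaM m n : (0 < m)%N -> (0 < n)%N -> coprime m n ->
  bigOmega (m * n) = (bigOmega m + bigOmega n)%N.
Proof.
move=> m0 n0 cmn; rewrite /bigOmega (perm_big _ (primes_perm m0 n0 cmn)) big_cat /=.
congr (_ + _)%N; apply: eq_big_seq => p hp; rewrite lognM //.
  have : p \notin primes n by apply/negP => pn; exact: primes_disj cmn hp pn.
  by rewrite -logn_gt0 -eqn0Ngt => /eqP ->; rewrite addn0.
have : p \notin primes m by apply/negP => pm; exact: primes_disj cmn pm hp.
by rewrite -logn_gt0 -eqn0Ngt => /eqP ->.
Qed.

Lemma omega_pexp p k : prime p -> (0 < k)%N -> omega (p ^ k) = 1%N.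
Proof. by move=> pp k0; rewrite /omega primesX // primes_prime. Qed.

Lemma bigOmega_pexp p k : prime p -> (0 < k)%N -> bigOmega (p ^ k) = k.
Proof. by move=> pp k0; rewrite /bigOmega primesX // primes_prime // big_seq1 pfactorK. Qed.

Definition Bd (R : realType) (A c : R) (n : nat) : R :=
  (A / (A + 1)) ^+ omega n * (A + 1) ^+ bigOmega n * (n%:R) `^ (3 * ln c / ln 3).

Lemma BdM (R : realType) (A c : R) m n : (0 < m)%N -> (0 < n)%N -> coprime m n ->
  Bd A c (m * n) = Bd A c m * Bd A c n.
Proof.
move=> m0 n0 cmn; rewrite /Bd omegaM // bigOmegaM // !exprD natrM powRM ?ler0n //.
ring.
Qed.

Theorem proposition3p6 (R : realType) (f finv : nat -> R) (A c : R) :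
  mult_arith f ->
  is_dirichlet_inverse f finv ->
  0 < A -> 0 < c -> c < 1 ->
  (forall n : nat, (2 <= n)%N -> `|f n| <= A * c ^+ n) ->
  forall n : nat, (2 <= n)%N ->
    `|finv n| <= (A / (A + 1)) ^+ omega n * (A + 1) ^+ bigOmega n
                 * (n%:R) `^ (3 * ln c / ln 3).
Proof.
move=> fm gi A0 c0 c1 fb.
suff H : forall n, (0 < n)%N -> `|finv n| <= Bd A c n.
  by move=> n n2; apply: H; apply: ltnW.
elim/ltn_ind => n IH n0.
have [->|n1] := eqVneq n 1%N.
  have o1 : omega 1 = 0%N by [].
  have b1 : bigOmega 1 = 0%N by rewrite /bigOmega (_ : primes 1 = [::]) // big_nil.
  by rewrite (g1 fm gi) /Bd o1 b1 !expr0 !mul1r mulr1n powR1 normr1.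
have n2 : (1 < n)%N by rewrite ltn_neqAle eq_sym n1 n0.
set p := pdiv n.
have pp : prime p := pdiv_prime n2.
have p1 := prime_gt1 pp.
set k := logn p n.
have k0 : (0 < k)%N by rewrite logn_gt0 mem_primes pp n0 pdiv_dvd.
set r := (n`_p^')%N.
have hn : n = (p ^ k * r)%N by rewrite -p_part partnC.
have hc : coprime (p ^ k) r by rewrite -p_part coprime_partC.
have r0 : (0 < r)%N by apply: part_gt0.
have pk2 : (2 <= p ^ k)%N.
  apply: (leq_trans p1); rewrite -{1}(expn1 p) leq_exp2l //.
have [r1|r1] := eqVneq r 1%N.
  rewrite hn r1 muln1; apply: le_trans (gpp fm gi A0 c0 c1 fb k pp) _.
  rewrite /Bd omega_pexp // bigOmega_pexp //.
  case: (k) k0 => // k' _ /=.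
  have -> : (A / (A + 1)) ^+ 1 * (A + 1) ^+ k'.+1 = A * (A + 1) ^+ k'.
    rewrite expr1 exprS mulrA divfK //; apply: lt0r_neq0; lra.
  by rewrite /ee.
have r2 : (2 <= r)%N by rewrite ltn_neqAle eq_sym r1 r0.
have pkn : (p ^ k < n)%N by rewrite hn -{1}(muln1 (p ^ k)%N) ltn_pmul2l // ltnW.
have rn : (r < n)%N by rewrite hn -{1}(mul1n r) ltn_pmul2r // ltnW.
rewrite hn (g_mul fm gi) ?expn_gt0 ?(ltnW p1) // normrM BdM ?expn_gt0 ?(ltnW p1) //.
apply: ler_pM => //.
- by apply: (IH _ pkn); rewrite expn_gt0 ltnW.
- exact: (IH _ rn).
Qed.
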